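(* Let $A\in\mathbb{C}^{n\times n}$ of rank $r>0$ be written in the Hartwig–Spindelböck decomposition $A=U\begin{bmatrix}\Sigma K&\Sigma L\\0&0\end{bmatrix}U^*$ (as in the context), and let $m\in\mathbb{N}=\{1,2,\dots\}$. Then $$A^{\#_m}=U\begin{bmatrix}(\Sigma K)^{\mathrm{WG}_m}P_{(\Sigma K)^{m-1}}&0\\0&0\end{bmatrix}U^*.$$
   Context: Hartwig–Spindelböck decomposition: any $A\in\mathbb{C}^{n\times n}$ of rank $r>0$ can be written as $A=U\begin{bmatrix}\Sigma K&\Sigma L\\0&0\end{bmatrix}U^*$ with $U$ unitary, $\Sigma=\mathrm{diag}(\sigma_1I_{r_1},\dots,\sigma_sI_{r_s})$, $\sigma_1>\dots>\sigma_s>0$ the singular values of $A$, $r_1+\dots+r_s=r$, and $K\in\mathbb{C}^{r\times r}$, $L\in\mathbb{C}^{r\times(n-r)}$ with $KK^*+LL^*=I_r$. For a square matrix $B$: $B^\dagger$ Moore–Penrose inverse, $P_B=BB^\dagger$, $B^0=I$, $\mathcal{R}(\cdot)$ column space; $\mathrm{Ind}(B)$ is the smallest nonnegative integer $k$ with $\mathcal{R}(B^k)=\mathcal{R}(B^{k+1})$. The core-EP inverse $B^{\mathrm{cEP}}$ is the unique $X$ with $XBX=X$ and $\mathcal{R}(X)=\mathcal{R}(X^* )=\mathcal{R}(B^k)$, $k=\mathrm{Ind}(B)$. For $m\in\mathbb{N}$, the $m$-weak group inverse is $B^{\mathrm{WG}_m}:=(B^{\mathrm{cEP}})^{m+1}B^m$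 and the $m$-weak core inverse is $B^{\#_m}:=B^{\mathrm{WG}_m}P_{B^m}$. *)

(* Defs.v *)
From HB Require Import structures.
From mathcomp Require Import all_boot all_order all_algebra.
From mathcomp Require Import complex.
From mathcomp Require Import boolp classical_sets reals.
Set Implicit Arguments. Unset Strict Implicit. Unset Printing Implicit Defensive.
Import Order.TTheory GRing.Theory Num.Theory Num.Syntax.
Local Open Scope ring_scope.

Section MatrixInverses.
Variable C : numClosedFieldType.

Definition ctrmx m n (B : 'M[C]_(m, n)) : 'M[C]_(n, m) := map_mx (@Num.conj C) B^T.

(* R(X) = R(Y) : equality of column spaces (= row spaces of transposes) *)
Definition colsp_eq n m p (X : 'M[C]_(n, m)) (Y : 'M[C]_(n, p)) : Prop :=
  (X^T == Y^T)%MS.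

Definition is_MP n (B X : 'M[C]_n) : Prop :=
  [/\ B *m X *m B = B, X *m B *m X = X,
      ctrmx (B *m X) = B *m X & ctrmx (X *m B) = X *m B].
Definition mpinv n (B : 'M[C]_n) : 'M[C]_n := xget 0 [set X | is_MP B X].

Definition projP n (B : 'M[C]_n) : 'M[C]_n := B *m mpinv B.

Definition is_index n (B : 'M[C]_n) (k : nat) : Prop :=
  colsp_eq (B ^+ k) (B ^+ k.+1) /\
  (forall j, (j < k)%N -> ~ colsp_eq (B ^+ j) (B ^+ j.+1)).

Definition is_coreEP n (B X : 'M[C]_n) : Prop :=
  X *m B *m X = X /\
  exists k, [/\ is_index B k, colsp_eq X (B ^+ k) & colsp_eq (ctrmx X) (B ^+ k)].
Definition coreEP n (B : 'M[C]_n) : 'M[C]_n := xget 0 [set X | is_coreEP B X].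

Definition wgInv (m : nat) n (B : 'M[C]_n) : 'M[C]_n :=
  coreEP B ^+ m.+1 *m B ^+ m.

Definition wcInv (m : nat) n (B : 'M[C]_n) : 'M[C]_n :=
  wgInv m B *m projP (B ^+ m).

End MatrixInverses.

(* Main.v *)
Require Import Defs.
From HB Require Import structures.
From mathcomp Require Import all_boot all_order all_algebra.
From mathcomp Require Import complex.
From mathcomp Require Import boolp classical_sets reals.
Import Order.TTheory GRing.Theory Num.Theory Num.Syntax.
Local Open Scope ring_scope.
Set Implicit Arguments. Unset Strict Implicit. Unset Printing Implicit Defensive.
Section Gen.
Variable C : numClosedFieldType.

Lemma ctrmxE m n (A : 'M[C]_(m,n)) i j : ctrmx A i j = (A j i)^*.
Proof. by rewrite /ctrmx !mxE. Qed.

Lemma ctrmxK m n (A : 'M[C]_(m,n)) : ctrmx (ctrmx A) = A.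
Proof. by apply/matrixP=> i j; rewrite !ctrmxE conjCK. Qed.

Lemma ctrmxM m n p (A : 'M[C]_(m,n)) (B : 'M[C]_(n,p)) :
  ctrmx (A *m B) = ctrmx B *m ctrmx A.
Proof. by rewrite /ctrmx trmx_mul map_mxM. Qed.

Lemma ctrmxD m n (A B : 'M[C]_(m,n)) : ctrmx (A + B) = ctrmx A + ctrmx B.
Proof. by rewrite /ctrmx linearD /= map_mxD. Qed.

Lemma ctrmx0 m n : ctrmx (0 : 'M[C]_(m,n)) = 0.
Proof. by rewrite /ctrmx trmx0 map_mx0. Qed.

Lemma ctrmx1 n : ctrmx (1%:M : 'M[C]_n) = 1%:M.
Proof. by rewrite /ctrmx trmx1 map_mx1. Qed.

Lemma ctrmx_block m1 m2 n1 n2 (a : 'M[C]_(m1,n1)) (b : 'M[C]_(m1,n2))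
  (c : 'M[C]_(m2,n1)) (d : 'M[C]_(m2,n2)) :
  ctrmx (block_mx a b c d) = block_mx (ctrmx a) (ctrmx c) (ctrmx b) (ctrmx d).
Proof. by rewrite /ctrmx tr_block_mx map_block_mx. Qed.

Lemma mxrank_ctrmx m n (A : 'M[C]_(m,n)) : \rank (ctrmx A) = \rank A.
Proof. by rewrite /ctrmx mxrank_map mxrank_tr. Qed.

Lemma ctrmx_mul_eq0 m n (F : 'M[C]_(m,n)) : ctrmx F *m F = 0 -> F = 0.
Proof.
move=> H; apply/matrixP=> i j; rewrite [RHS]mxE.
have := congr1 (fun M : 'M[C]_n => M j j) H; rewrite !mxE => S.
have S' : \sum_k `|F k j| ^+ 2 = 0.
  by rewrite -[X in _ = X]S; apply: eq_bigr => k _; rewrite ctrmxE normCKC.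
have := (@psumr_eq0P _ _ xpredT (fun k => `|F k j| ^+ 2) (fun k _ => exprn_ge0 2 (normr_ge0 (F k j))) S' i isT).
by move/eqP; rewrite expf_eq0 normr_eq0 => /andP[_ /eqP].
Qed.

Lemma ctrmx_mul_unit n r (F : 'M[C]_(n,r)) : \rank F = r -> ctrmx F *m F \in unitmx.
Proof.
move=> rF; rewrite -row_free_unit -kermx_eq0; apply/eqP.
set V := kermx _.
have HV : V *m (ctrmx F *m F) = 0 := mulmx_ker _.
have H1 : ctrmx (F *m ctrmx V) *m (F *m ctrmx V) = 0.
  by rewrite ctrmxM ctrmxK !mulmxA -(mulmxA V) HV mul0mx.
have H2 := ctrmx_mul_eq0 H1.
have H3 : (ctrmx V)^T *m F^T == 0 by rewrite -trmx_mul H2 trmx0.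
have fF : row_free F^T by rewrite /row_free mxrank_tr rF.
rewrite mulmx_free_eq0 // in H3.
have H4 : ctrmx V = 0 by apply: trmx_inj; rewrite trmx0; apply/eqP.
by rewrite -[V]ctrmxK H4 ctrmx0.
Qed.

Lemma ctrmx_inv n (M : 'M[C]_n) : M \in unitmx -> ctrmx (invmx M) = invmx (ctrmx M).
Proof.
move=> uM.
have H : ctrmx (invmx M) *m ctrmx M = 1%:M by rewrite -ctrmxM mulmxV // ctrmx1.
have [_ uY] := mulmx1_unit H.
by rewrite -[LHS]mulmx1 -(mulmxV uY) mulmxA H mul1mx.
Qed.

Lemma MP_fact n r (F : 'M[C]_(n,r)) (G : 'M[C]_(r,n)) :
  \rank F = r -> \rank (ctrmx G) = r -> exists X, is_MP (F *m G) X.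
Proof.
move=> rF rG.
set M1 := ctrmx F *m F; set M2 := G *m ctrmx G.
have u1 : M1 \in unitmx := ctrmx_mul_unit rF.
have u2 : M2 \in unitmx by have := ctrmx_mul_unit rG; rewrite ctrmxK.
have h1 : ctrmx M1 = M1 by rewrite /M1 ctrmxM ctrmxK.
have h2 : ctrmx M2 = M2 by rewrite /M2 ctrmxM ctrmxK.
set X := ctrmx G *m invmx M2 *m invmx M1 *m ctrmx F.
exists X.
have eBX : F *m G *m X = F *m invmx M1 *m ctrmx F.
  by rewrite /X !mulmxA -(mulmxA F G) -/M2 (mulmxK u2).
have eXB : X *m (F *m G) = ctrmx G *m invmx M2 *m G.
  by rewrite /X !mulmxA -(mulmxA _ (ctrmx F) F) -/M1 (mulmxKV u1).
split.
- by rewrite eBX !mulmxA -(mulmxA _ (ctrmx F) F) -/M1 (mulmxKV u1).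
- by rewrite eXB /X !mulmxA -(mulmxA _ G (ctrmx G)) -/M2 (mulmxKV u2).
- by rewrite eBX !ctrmxM ctrmxK ctrmx_inv // h1 mulmxA.
- by rewrite eXB !ctrmxM ctrmxK ctrmx_inv // h2 mulmxA.
Qed.

Lemma MP_exists n (B : 'M[C]_n) : exists X, is_MP B X.
Proof.
rewrite -(mulmx_base B); apply: MP_fact; first exact: eqP (col_base_full B).
by rewrite mxrank_ctrmx; exact: eqP (row_base_free B).
Qed.

Lemma mpinvP n (B : 'M[C]_n) : is_MP B (mpinv B).
Proof.
have [X HX] := MP_exists B.
by have := @xgetPex _ 0 [set X | is_MP B X] (ex_intro _ X HX).
Qed.


Definition colsub m n p (X : 'M[C]_(n,m)) (Y : 'M[C]_(n,p)) := (X^T <= Y^T)%MS.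

Lemma colsubP m n p (X : 'M[C]_(n,m)) (Y : 'M[C]_(n,p)) :
  reflect (exists D, X = Y *m D) (colsub X Y).
Proof.
apply: (iffP submxP) => [[D HD]|[D ->]].
  by exists D^T; apply: trmx_inj; rewrite trmx_mul trmxK.
by exists D^T; rewrite trmx_mul.
Qed.

Lemma colsubMr m n p (X : 'M[C]_(n,m)) (D : 'M[C]_(m,p)) : colsub (X *m D) X.
Proof. by apply/colsubP; exists D. Qed.

Lemma colsub_refl m n (X : 'M[C]_(n,m)) : colsub X X.
Proof. exact: submx_refl. Qed.

Lemma colsub_trans m1 m2 m3 n (X : 'M[C]_(n,m1)) (Y : 'M[C]_(n,m2)) (Z : 'M[C]_(n,m3)) :
  colsub X Y -> colsub Y Z -> colsub X Z.
Proof. exact: submx_trans. Qed.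

Lemma colsubMl m1 m2 n k (M : 'M[C]_(k,n)) (X : 'M[C]_(n,m1)) (Y : 'M[C]_(n,m2)) :
  colsub X Y -> colsub (M *m X) (M *m Y).
Proof. by move=> /colsubP [D ->]; rewrite mulmxA; apply: colsubMr. Qed.

Lemma colsp_eqP m1 m2 n (X : 'M[C]_(n,m1)) (Y : 'M[C]_(n,m2)) :
  colsp_eq X Y <-> colsub X Y /\ colsub Y X.
Proof. by rewrite /colsp_eq /colsub; split => [/andP[]|[-> ->]]. Qed.

Lemma colsub_rank m1 m2 n (X : 'M[C]_(n,m1)) (Y : 'M[C]_(n,m2)) :
  colsub X Y -> (\rank X <= \rank Y)%N.
Proof. by move=> s; rewrite -mxrank_tr -[\rank Y]mxrank_tr mxrankS. Qed.

Lemma colsub_eq_rank m1 m2 n (X : 'M[C]_(n,m1)) (Y : 'M[C]_(n,m2)) :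
  colsub X Y -> (\rank Y <= \rank X)%N -> colsp_eq X Y.
Proof.
move=> s r; rewrite /colsp_eq -(mxrank_leqif_eq s).2 eqn_leq !mxrank_tr.
by rewrite (colsub_rank s) r.
Qed.

Lemma colsp_eq_rank m1 m2 n (X : 'M[C]_(n,m1)) (Y : 'M[C]_(n,m2)) :
  colsp_eq X Y -> \rank X = \rank Y.
Proof. by move/colsp_eqP=> [/colsub_rank a /colsub_rank b]; apply/eqP; rewrite eqn_leq a b. Qed.

Lemma colsp_eq_sym m1 m2 n (X : 'M[C]_(n,m1)) (Y : 'M[C]_(n,m2)) :
  colsp_eq X Y -> colsp_eq Y X.
Proof. by move/colsp_eqP=> [a b]; apply/colsp_eqP. Qed.

Lemma colsp_eq_trans m1 m2 m3 n (X : 'M[C]_(n,m1)) (Y : 'M[C]_(n,m2)) (Z : 'M[C]_(n,m3)) :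
  colsp_eq X Y -> colsp_eq Y Z -> colsp_eq X Z.
Proof.
move/colsp_eqP=> [a b] /colsp_eqP [c d]; apply/colsp_eqP.
by split; [apply: colsub_trans a c | apply: colsub_trans d b].
Qed.

Lemma herm_idem_eq n (P1 P2 : 'M[C]_n) : ctrmx P1 = P1 -> ctrmx P2 = P2 ->
  P1 *m P1 = P1 -> P2 *m P2 = P2 -> colsp_eq P1 P2 -> P1 = P2.
Proof.
move=> h1 h2 i1 i2 /colsp_eqP [/colsubP [D1 E1] /colsubP [D2 E2]].
have a : P2 *m P1 = P1 by rewrite {1}E1 mulmxA i2 -E1.
have b : P1 *m P2 = P2 by rewrite {1}E2 mulmxA i1 -E2.
by rewrite -h1 -a ctrmxM h1 h2 b.
Qed.

Lemma idem_herm n (P : 'M[C]_n) : P *m P = P -> colsub (ctrmx P) P -> ctrmx P = P.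
Proof.
move=> i /colsubP [W E].
have a : P *m ctrmx P = ctrmx P by rewrite {1}E mulmxA i -E.
have b : P *m ctrmx P = P by rewrite -[RHS]ctrmxK -[in RHS]a ctrmxM ctrmxK.
by rewrite -a b.
Qed.

Lemma projP_herm n (Y : 'M[C]_n) : ctrmx (projP Y) = projP Y.
Proof. by case: (mpinvP Y). Qed.

Lemma projP_idem n (Y : 'M[C]_n) : projP Y *m projP Y = projP Y.
Proof. by case: (mpinvP Y) => p1 _ _ _; rewrite /projP mulmxA p1. Qed.

Lemma projP_range n (Y : 'M[C]_n) : colsp_eq (projP Y) Y.
Proof.
case: (mpinvP Y) => p1 _ _ _; apply/colsp_eqP; split; first exact: colsubMr.
by apply/colsubP; exists Y; rewrite /projP p1.
Qed.

Lemma projP_char n (Y P : 'M[C]_n) : ctrmx P = P -> P *m P = P -> colsp_eq P Y ->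
  projP Y = P.
Proof.
move=> h i e; apply: herm_idem_eq => //; [exact: projP_herm | exact: projP_idem|].
exact: colsp_eq_trans (projP_range Y) (colsp_eq_sym e).
Qed.

Lemma pow_colsubS n (B : 'M[C]_n) k : colsub (B ^+ k.+1) (B ^+ k).
Proof. by rewrite exprSr -mulmxE; apply: colsubMr. Qed.

Lemma pow_colsub n (B : 'M[C]_n) k j : (k <= j)%N -> colsub (B ^+ j) (B ^+ k).
Proof.
elim: j => [|j IH]; first by rewrite leqn0 => /eqP ->; apply: colsub_refl.
rewrite leq_eqVlt => /orP [/eqP -> | ]; first exact: colsub_refl.
by rewrite ltnS => /IH; apply: colsub_trans (pow_colsubS _ _).
Qed.

Lemma index_exists n (B : 'M[C]_n) : exists k, is_index B k.
Proof.
pose P k := ((B ^+ k)^T == (B ^+ k.+1)^T)%MS.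
have exP : exists k, P k.
  case: (boolP [exists k : 'I_n.+1, P k]) => [/existsP [k Pk]| /existsPn H].
    by exists k.
  suff : forall k, (k <= n.+1)%N -> (\rank (B ^+ k) + k <= n)%N.
    by move/(_ n.+1 (leqnn _)); rewrite addnS ltnNge leq_addl.
  elim=> [|k IH] hk; first by rewrite expr0 addn0 mxrank1.
  have hk' : (k < n.+1)%N by [].
  have := H (Ordinal hk'); rewrite /P /= => nP.
  have lt : (\rank (B ^+ k.+1) < \rank (B ^+ k))%N.
    rewrite ltnNge; apply/negP => r.
    have := colsub_eq_rank (pow_colsubS B k) r.
    by move/colsp_eq_sym; rewrite /colsp_eq (negPf nP).
  by rewrite addnS; apply: leq_trans (IH (ltnW hk)); rewrite ltn_add2r.
case: (ex_minnP exP) => k Pk mk; exists k; split => // j jk Pj.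
by have := mk j Pj; rewrite leqNgt jk.
Qed.

Lemma index_uniq n (B : 'M[C]_n) k1 k2 : is_index B k1 -> is_index B k2 -> k1 = k2.
Proof.
move=> [a1 b1] [a2 b2]; case: (ltngtP k1 k2) => // h.
- by case: (b2 _ h a1).
- by case: (b1 _ h a2).
Qed.

Lemma index_stable n (B : 'M[C]_n) k j : is_index B k -> (k <= j)%N ->
  colsp_eq (B ^+ j) (B ^+ k).
Proof.
move=> [/colsp_eqP [a _] _] kj; apply/colsp_eqP; split; first exact: pow_colsub.
elim: j kj => [|j IH]; first by rewrite leqn0 => /eqP ->; apply: colsub_refl.
rewrite leq_eqVlt => /orP [/eqP -> | ]; first exact: colsub_refl.
rewrite ltnS => /IH h; apply: colsub_trans a _.
by rewrite !exprS -!mulmxE; apply: colsubMl.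
Qed.

Lemma coreEP_exists n (B : 'M[C]_n) : exists X, is_coreEP B X.
Proof.
have [k Hk] := index_exists B.
set Y := B ^+ k.+1; set Yd := mpinv Y.
case: (mpinvP Y) => p1 p2 p3 p4.
have eY : B *m B ^+ k = Y by rewrite /Y exprS.
have rX : (\rank (B ^+ k) <= \rank (B ^+ k *m Yd))%N.
  have [/colsp_eqP [a _] _] := Hk.
  move/colsubP: a => [D ED].
  have e : B *m (B ^+ k *m Yd) *m B ^+ k = B ^+ k.
    by rewrite mulmxA eY {1}ED mulmxA p1 -ED.
  rewrite -{1}e; apply: leq_trans (mxrankM_maxl _ _) _; exact: mxrankM_maxr.
exists (B ^+ k *m Yd); split.
  by rewrite !mulmxA -(mulmxA _ B) eY -(mulmxA _ Yd Y) -mulmxA p2.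
exists k; split => //.
  by apply: colsub_eq_rank; first exact: colsubMr.
apply: colsub_eq_rank; last by rewrite mxrank_ctrmx.
rewrite ctrmxM; apply: colsub_trans (colsubMr _ _) _.
have e : ctrmx Yd = Y *m Yd *m ctrmx Yd.
  have e1 : Yd = Yd *m ctrmx Yd *m ctrmx Y by rewrite -mulmxA -ctrmxM p3 mulmxA p2.
  by rewrite {1}e1 !ctrmxM !ctrmxK mulmxA.
rewrite e -mulmxA; apply: colsub_trans (colsubMr _ _) _.
exact: pow_colsubS.
Qed.

Lemma coreEP_uniq n (B X1 X2 : 'M[C]_n) : is_coreEP B X1 -> is_coreEP B X2 -> X1 = X2.
Proof.
move=> [i1 [k1 [h1 r1 c1]]] [i2 [k2 [h2 r2 c2]]].
have ek := index_uniq h1 h2; subst k2.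
set V := B ^+ k1.
have [/colsp_eqP [VY _] _] := h1.
have PP : forall X, X *m B *m X = X -> colsp_eq X V -> colsp_eq (ctrmx X) V ->
   [/\ ctrmx (B *m X) = B *m X, (B *m X) *m (B *m X) = B *m X & colsp_eq (B *m X) V].
  move=> X iX rX cX.
  have idem : (B *m X) *m (B *m X) = B *m X by rewrite -!mulmxA (mulmxA X) iX.
  have rg : colsp_eq (B *m X) V.
    apply: colsub_eq_rank.
      have /colsp_eqP [a _] := rX.
      apply: colsub_trans (colsubMl B a) _.
      have -> : B *m B ^+ k1 = B ^+ k1.+1 by rewrite exprS.
      exact: pow_colsubS.
    rewrite -(colsp_eq_rank rX) -{1}iX -mulmxA; exact: mxrankM_maxr.
  split => //; apply: idem_herm => //.
  rewrite ctrmxM; apply: colsub_trans (colsubMr _ _) _.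
  have /colsp_eqP [a _] := cX; have /colsp_eqP [_ b] := rg.
  exact: colsub_trans a b.
have [hA iA rA] := PP X1 i1 r1 c1.
have [hB iB rB] := PP X2 i2 r2 c2.
have eP : B *m X1 = B *m X2.
  by apply: herm_idem_eq => //; apply: colsp_eq_trans rA (colsp_eq_sym rB).
have : colsub X2 X1.
  have /colsp_eqP [a _] := r2; have /colsp_eqP [_ b] := r1.
  exact: colsub_trans a b.
move/colsubP=> [W EW].
by rewrite -[LHS]i1 -mulmxA eP mulmxA {1}EW mulmxA i1 -EW.
Qed.

Lemma coreEP_eq n (B X : 'M[C]_n) : is_coreEP B X -> coreEP B = X.
Proof.
move=> h; apply: xget_unique => //= Y hY; exact: coreEP_uniq hY h.
Qed.

Lemma coreEPP n (B : 'M[C]_n) : is_coreEP B (coreEP B).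
Proof. by have [X hX] := coreEP_exists B; rewrite (coreEP_eq hX). Qed.


Section Unitary.
Variables (n : nat) (U : 'M[C]_n).
Hypothesis hU : U *m ctrmx U = 1%:M.
Let hU' : ctrmx U *m U = 1%:M := mulmx1C hU.

Let f (X : 'M[C]_n) := U *m X *m ctrmx U.

Lemma fM X Y : f (X *m Y) = f X *m f Y.
Proof. by rewrite /f !mulmxA -(mulmxA _ (ctrmx U) U) hU' mulmx1. Qed.

Lemma fX X k : f X ^+ k = f (X ^+ k).
Proof.
elim: k => [|k IH]; first by rewrite !expr0 /f mulmx1 hU.
by rewrite !exprS -!mulmxE IH fM.
Qed.

Lemma fC X : ctrmx (f X) = f (ctrmx X).
Proof. by rewrite /f !ctrmxM ctrmxK mulmxA. Qed.

Lemma f_colsub X Y : colsub X Y -> colsub (f X) (f Y).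
Proof.
move/colsubP=> [D ->]; apply/colsubP; exists (f D).
by rewrite -fM.
Qed.

Lemma f_colsubV X Y : colsub (f X) (f Y) -> colsub X Y.
Proof.
move/colsubP=> [D E]; apply/colsubP; exists (ctrmx U *m D *m U).
have e : forall Z, Z = ctrmx U *m f Z *m U.
  by move=> Z; rewrite /f !mulmxA hU' mul1mx -mulmxA hU' mulmx1.
by rewrite [LHS](e X) E /f !mulmxA hU' mul1mx.
Qed.

Lemma f_colsp X Y : colsp_eq X Y <-> colsp_eq (f X) (f Y).
Proof.
split; move/colsp_eqP=> [a b]; apply/colsp_eqP; split;
  by [apply: f_colsub | apply: f_colsubV].
Qed.

Lemma f_index B k : is_index B k -> is_index (f B) k.
Proof.
move=> [a b]; split; first by rewrite !fX; apply: (iffLR (f_colsp _ _)).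
by move=> j jk; rewrite !fX => /(iffRL (f_colsp _ _)); apply: b.
Qed.

Lemma f_coreEP B : coreEP (f B) = f (coreEP B).
Proof.
apply: coreEP_eq; have [i [k [h r c]]] := coreEPP B.
split; first by rewrite -!fM i.
exists k; split; first exact: f_index.
  by rewrite fX; apply: (iffLR (f_colsp _ _)).
by rewrite fX fC; apply: (iffLR (f_colsp _ _)).
Qed.

Lemma f_projP Y : projP (f Y) = f (projP Y).
Proof.
apply: projP_char; first by rewrite fC projP_herm.
  by rewrite -fM projP_idem.
by apply: (iffLR (f_colsp _ _)); apply: projP_range.
Qed.

Lemma f_wcInv m B : wcInv m (f B) = f (wcInv m B).
Proof.
by rewrite /wcInv /wgInv f_coreEP !fX f_projP !fM.
Qed.

End Unitary.

Section Block.
Variables (r q : nat) (S : 'M[C]_r) (Q : 'M[C]_(r,q)) (Z1 : 'M[C]_r) (Z2 : 'M[C]_(q,r)).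
Hypothesis hZ : S *m Z1 + Q *m Z2 = 1%:M.

Let T : 'M[C]_(r + q) := block_mx S Q 0 0.

Lemma Tpow j : T ^+ j.+1 = block_mx (S ^+ j *m S) (S ^+ j *m Q) 0 0.
Proof.
elim: j => [|j IH]; first by rewrite expr1 expr0 !mul1mx.
rewrite exprSr -mulmxE IH /T mulmx_block !mulmx0 !mul0mx !addr0.
by rewrite [S ^+ j.+1]exprSr.
Qed.

Lemma Tcol (Z0 : 'M[C]_r) j : colsp_eq Z0 (S ^+ j) ->
  colsp_eq (block_mx Z0 0 0 0 : 'M[C]_(r + q)) (T ^+ j.+1).
Proof.
move/colsp_eqP=> [/colsubP [D ED] /colsubP [D' ED']]; rewrite Tpow.
apply/colsp_eqP; split; apply/colsubP.
  exists (block_mx (Z1 *m D) 0 (Z2 *m D) 0).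
  rewrite mulmx_block !mulmx0 !mul0mx !addr0.
  by rewrite -!mulmxA !(mulmxA S) !(mulmxA Q) -mulmxDr -mulmxDl hZ mul1mx -ED.
exists (block_mx (D' *m S) (D' *m Q) 0 0).
by rewrite mulmx_block !mulmx0 !mul0mx !addr0 !mulmxA -ED'.
Qed.

Lemma blk_pow (X : 'M[C]_r) k :
  (block_mx X 0 0 0 : 'M[C]_(r + q)) ^+ k.+1 = block_mx (X ^+ k.+1) 0 0 0.
Proof.
elim: k => [|k IH]; first by rewrite !expr1.
rewrite exprS -mulmxE IH mulmx_block !mulmx0 !mul0mx !addr0.
by rewrite [X ^+ k.+2]exprS.
Qed.

Lemma T_coreEP : coreEP T = block_mx (coreEP S) 0 0 0.
Proof.
apply: coreEP_eq; have [i [kS [hS r1 c1]]] := coreEPP S.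
set X := coreEP S in i r1 c1 *.
have [kT hT] := index_exists T.
set N := maxn kT kS.
have eS : colsp_eq (S ^+ N) (S ^+ kS) by apply: index_stable hS _; apply: leq_maxr.
have eT : colsp_eq (T ^+ N.+1) (T ^+ kT).
  by apply: index_stable hT _; apply: leq_trans (leq_maxl kT kS) _.
split.
  by rewrite /T !mulmx_block !mulmx0 !mul0mx !addr0 !mul0mx i.
exists kT; split => //.
  apply: colsp_eq_trans eT; apply: Tcol.
  exact: colsp_eq_trans r1 (colsp_eq_sym eS).
rewrite ctrmx_block !ctrmx0.
apply: colsp_eq_trans eT; apply: Tcol.
exact: colsp_eq_trans c1 (colsp_eq_sym eS).
Qed.

Lemma T_projP j : projP (T ^+ j.+1) = block_mx (projP (S ^+ j)) 0 0 0.
Proof.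
apply: projP_char.
- by rewrite ctrmx_block !ctrmx0 projP_herm.
- by rewrite mulmx_block !mulmx0 !mul0mx !addr0 projP_idem.
- by apply: Tcol; apply: projP_range.
Qed.

Lemma T_wcInv m : wcInv m.+1 T =
  block_mx (wgInv m.+1 S *m projP (S ^+ m)) 0 0 0.
Proof.
rewrite /wcInv /wgInv T_coreEP blk_pow T_projP Tpow.
rewrite !mulmx_block !mulmx0 !mul0mx !addr0.
by rewrite !mul0mx [S ^+ m.+1]exprSr.
Qed.

End Block.

End Gen.

Theorem theorem6p1 (R : realType) (r q m : nat)
  (A U : 'M[R[i]]_(r + q)) (d : 'rV[R[i]]_r) (K : 'M[R[i]]_r) (L : 'M[R[i]]_(r, q)) :
  (0 < r)%N -> (0 < m)%N -> \rank A = r ->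
  U *m ctrmx U = 1%:M ->
  (forall i : 'I_r, 0 < d 0 i) ->
  (forall i j : 'I_r, (i <= j)%N -> d 0 j <= d 0 i) ->
  K *m ctrmx K + L *m ctrmx L = 1%:M ->
  A = U *m block_mx (diag_mx d *m K) (diag_mx d *m L) 0 0 *m ctrmx U ->
  wcInv m A =
    U *m block_mx (wgInv m (diag_mx d *m K) *m projP ((diag_mx d *m K) ^+ (m - 1)))
                  0 0 0 *m ctrmx U.
Proof.
move=> r0 m0 rA hU dpos dord hKL ->.
case: m m0 => // m _.
set S := diag_mx d *m K; set Q := diag_mx d *m L.
have uD : diag_mx d \in unitmx.
  rewrite unitmxE det_diag unitfE prodf_seq_neq0.
  by apply/allP => i _; apply/implyP => _; exact: lt0r_neq0 (dpos i).
have hZ : S *m (ctrmx K *m invmx (diag_mx d)) + Q *m (ctrmx L *m invmx (diag_mx d))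
   = 1%:M.
  rewrite /S /Q !mulmxA -mulmxDl -!(mulmxA (diag_mx d)) -mulmxDr hKL mulmx1.
  exact: mulmxV.
rewrite (f_wcInv hU) (T_wcInv hZ) subn1 /=.
by [].
Qed.
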